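(* Let $(A,G,\alpha)$ be a C*-dynamical system and $(J,H,\beta)$ a regular C*-dynamical subsystem. Then $(A,G,\alpha)$ is sub-induced from $(J,H,\beta)$ if and only if $H=\{g\in G:\alpha_g(J)=J\}$ and the ideals $\{\alpha_g(J)\}_{gH\in G/H}$ are pairwise orthogonal.
   Context: A C*-dynamical system $(A,G,\alpha)$: C*-algebra $A$, discrete group $G$, action $\alpha$. A closed ideal is regular if $J=J^{\perp\perp}$ ($X^\perp=\{a:ax=xa=0\ \forall x\in X\}$); ideals are orthogonal if they intersect trivially. A regular C*-dynamical subsystem $(J,H,\beta)$: $H\le G$, $J$ an $H$-invariant regular ideal of $A$, $\beta$ the restriction of $\alpha$. A system $(K,G,\gamma)$ is induced from $(J,H,\beta)$ if $\{\gamma_g(J)\}_{gH\in G/H}$ are pairwise orthogonal, $(\bigcup_g\gamma_g(J))^{\perp\perp}=K$, and $H=\{g:\gamma_g(J)=J\}$. $(A,G,\alpha)$ is sub-induced from $(J,H,\beta)$ if there is a nonzero $G$-invariant regular ideal $K\trianglelefteq A$ containing $J$ such that $(K,G,\alpha|_K)$ is induced from $(J,H,\beta)$. *)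

(* Defs.v *)
From HB Require Import structures.
From mathcomp Require Import all_boot all_order all_algebra.
From mathcomp Require Import complex.
From mathcomp Require Import all_classical all_reals all_analysis.
Set Implicit Arguments. Unset Strict Implicit. Unset Printing Implicit Defensive.
Import Order.TTheory GRing.Theory Num.Theory.
Import numFieldNormedType.Exports.
Local Open Scope classical_set_scope.
Local Open Scope ring_scope.
Local Open Scope complex_scope.

Section CStar.
Variable R : realType.
Variable A : completeNormedModType R[i].
Variables (mul : A -> A -> A) (star : A -> A).

Record cstar_axioms : Prop := CstarAxioms {
  cs_mulA : forall x y z, mul x (mul y z) = mul (mul x y) z;
  cs_mulDl : forall x y z, mul (x + y) z = mul x z + mul y z;
  cs_mulDr : forall x y z, mul x (y + z) = mul x y + mul x z;
  cs_mulZl : forall (c : R[i]) x y, mul (c *: x) y = c *: mul x y;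
  cs_mulZr : forall (c : R[i]) x y, mul x (c *: y) = c *: mul x y;
  cs_starK : forall x, star (star x) = x;
  cs_starD : forall x y, star (x + y) = star x + star y;
  cs_starZ : forall (c : R[i]) x, star (c *: x) = (Num.conj c) *: star x;
  cs_starM : forall x y, star (mul x y) = mul (star y) (star x);
  cs_norm_mul : forall x y, `|mul x y| <= `|x| * `|y|;
  cs_cstar : forall x, `|mul (star x) x| = `|x| ^+ 2 }.

Definition star_automorphism (f : A -> A) : Prop :=
  [/\ forall x y, f (x + y) = f x + f y,
      forall (c : R[i]) x, f (c *: x) = c *: f x,
      forall x y, f (mul x y) = mul (f x) (f y),
      forall x, f (star x) = star (f x)
    & bijective f].

Definition closed_ideal (J : set A) : Prop :=
  [/\ J 0,
      forall x y, J x -> J y -> J (x + y),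
      forall (c : R[i]) x, J x -> J (c *: x),
      forall a x, J x -> J (mul a x) /\ J (mul x a)
    & closed J].

Definition perp_in (S X : set A) : set A :=
  [set a | S a /\ forall x, X x -> mul a x = 0 /\ mul x a = 0].

Definition perp (X : set A) : set A := perp_in setT X.

Definition regular_ideal (J : set A) : Prop :=
  closed_ideal J /\ J = perp (perp J).

Definition orthogonal_ideals (I K : set A) : Prop := I `&` K = [set 0].
End CStar.

Section Dyn.
Local Open Scope group_scope.
Variable R : realType.
Variable A : completeNormedModType R[i].
Variables (mul : A -> A -> A) (star : A -> A).
Variable G : groupType.

Definition is_subgroup (H : set G) : Prop :=
  [/\ H 1, forall g h, H g -> H h -> H (g * h) & forall g, H g -> H g^-1].

Definition cstar_action (alpha : G -> A -> A) : Prop :=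
  [/\ forall g, star_automorphism mul star (alpha g),
      forall x, alpha 1 x = x
    & forall g h x, alpha (g * h) x = alpha g (alpha h x)].

(* (J,H,beta) is a regular C*-dynamical subsystem of (A,G,alpha);
   beta is the restriction of alpha, so it is not a separate datum.
   The ideal J is taken nonzero. *)
Definition regular_subsystem (alpha : G -> A -> A) (J : set A) (H : set G) :=
  [/\ is_subgroup H, regular_ideal mul J, J <> [set 0]
    & forall h, H h -> alpha h @` J = J].

(* (K,G,alpha|_K) is induced from (J,H,beta); the annihilators are
   computed inside the C*-algebra K. Distinct cosets gH <> kH are
   exactly those with g^-1 k notin H. *)
Definition induced_from (alpha : G -> A -> A) (K J : set A) (H : set G) :=
  [/\ forall g k, ~ H (g^-1 * k) -> orthogonal_ideals (alpha g @` J) (alpha k @` J),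
      perp_in mul K (perp_in mul K (\bigcup_(g in setT) alpha g @` J)) = K
    & H = [set g | alpha g @` J = J]].

Definition sub_induced (alpha : G -> A -> A) (J : set A) (H : set G) :=
  exists K : set A,
    [/\ K <> [set 0], regular_ideal mul K, (forall g, alpha g @` K = K),
        J `<=` K & induced_from alpha K J H].
End Dyn.

(* Main.v *)
Require Import Defs.
From HB Require Import structures.
From mathcomp Require Import all_boot all_order all_algebra.
From mathcomp Require Import complex.
From mathcomp Require Import all_classical all_reals all_analysis.
Import Order.TTheory GRing.Theory Num.Theory.
Import numFieldNormedType.Exports.
Local Open Scope classical_set_scope.
Local Open Scope ring_scope.
Local Open Scope complex_scope.
Set Implicit Arguments. Unset Strict Implicit.

Section Aux.
Variable R : realType.
Variable A : completeNormedModType R[i].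
Variables (mul : A -> A -> A) (star : A -> A).
Hypothesis hA : cstar_axioms mul star.

Lemma mul0x x : mul 0 x = 0.
Proof.
have := cs_mulDl hA 0 0 x; rewrite addr0 => /eqP.
by rewrite -subr_eq subrr eq_sym => /eqP.
Qed.

Lemma mulx0 x : mul x 0 = 0.
Proof.
have := cs_mulDr hA x 0 0; rewrite addr0 => /eqP.
by rewrite -subr_eq subrr eq_sym => /eqP.
Qed.

Lemma mulBl a b x : mul (a - b) x = mul a x - mul b x.
Proof. by rewrite (cs_mulDl hA) -scaleN1r (cs_mulZl hA) scaleN1r. Qed.
Lemma mulBr x a b : mul x (a - b) = mul x a - mul x b.
Proof. by rewrite (cs_mulDr hA) -scaleN1r (cs_mulZr hA) scaleN1r. Qed.

Lemma lip_cont (f : A -> A) (k : R[i]) : 0 <= k ->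
  (forall a b, `|f a - f b| <= k * `|a - b|) -> continuous f.
Proof.
move=> k0 fk a; apply/cvgrPdist_lt => e e0.
have k10 : 0 < k + 1 by rewrite ltr_wpDl.
near=> b.
apply: (le_lt_trans (fk a b)).
have : `|a - b| < e / (k + 1).
  near: b. apply: cvgr_dist_lt; [exact: cvg_id| by rewrite divr_gt0].
move=> h.
apply: (le_lt_trans (y := (k + 1) * `|a - b|)).
  by rewrite ler_wpM2r // lerDl.
by rewrite -ltr_pdivlMl // mulrC.
Unshelve. all: by end_near.
Qed.

Lemma closed_annl x : closed [set a | mul a x = 0].
Proof.
have -> : [set a | mul a x = 0] = (fun a => mul a x) @^-1` [set y | y = 0] by [].
apply: preimage_closed; last exact/accessible_closed_set1/hausdorff_accessible/norm_hausdorff.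
move=> a _; apply: (@lip_cont _ `|x|) => // u v.
by rewrite -mulBl mulrC; exact: (cs_norm_mul hA).
Qed.

Lemma closed_annr x : closed [set a | mul x a = 0].
Proof.
have -> : [set a | mul x a = 0] = (fun a => mul x a) @^-1` [set y | y = 0] by [].
apply: preimage_closed; last exact/accessible_closed_set1/hausdorff_accessible/norm_hausdorff.
move=> a _; apply: (@lip_cont _ `|x|) => // u v.
by rewrite -mulBr; exact: (cs_norm_mul hA).
Qed.

Definition mclosed (X : set A) := forall a x, X x -> X (mul a x) /\ X (mul x a).

Lemma perp_anti (X Y : set A) : X `<=` Y -> perp mul Y `<=` perp mul X.
Proof. by move=> XY a [_ h]; split => // x /XY /h. Qed.

Lemma perp_ext (X : set A) : X `<=` perp mul (perp mul X).
Proof. by move=> x Xx; split => // a [_ /(_ x Xx) [h1 h2]]; split. Qed.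

Lemma perp3 (X : set A) : perp mul (perp mul (perp mul X)) = perp mul X.
Proof.
apply/seteqP; split; last exact: perp_ext.
by apply: perp_anti; apply: perp_ext.
Qed.

Lemma perp_closed (X : set A) : closed (perp mul X).
Proof.
have -> : perp mul X = \bigcap_(x in X) ([set a | mul a x = 0] `&` [set a | mul x a = 0]).
  apply/seteqP; split.
    by move=> a [_ h] x Xx; have [? ?] := h x Xx; split.
  by move=> a h; split => // x Xx; have [? ?] := h x Xx; split.
apply: closed_bigI => x _; apply: closedI; [exact: closed_annl| exact: closed_annr].
Qed.

Lemma perp_ideal (X : set A) : mclosed X -> closed_ideal mul (perp mul X).
Proof.
move=> mX; split.
- by split => // x _; rewrite mul0x mulx0.
- move=> x y [_ hx] [_ hy]; split => // z Xz.
  have [h1 h2] := hx z Xz; have [h3 h4] := hy z Xz.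
  by rewrite (cs_mulDl hA) (cs_mulDr hA) h1 h2 h3 h4 addr0.
- move=> c x [_ hx]; split => // z Xz; have [h1 h2] := hx z Xz.
  by rewrite (cs_mulZl hA) (cs_mulZr hA) h1 h2 scaler0.
- move=> a x [_ hx]; split; split => // z Xz.
  + have [h1 h2] := hx z Xz; have [_ h3] := hx _ (proj2 (mX a z Xz)).
    have [h4 _] := hx _ (proj1 (mX a z Xz)).
    split; first by rewrite -(cs_mulA hA) h1 mulx0.
    by rewrite (cs_mulA hA) h3.
  + have [h1 h2] := hx z Xz; have [h4 _] := hx _ (proj1 (mX a z Xz)).
    split; first by rewrite -(cs_mulA hA) h4.
    by rewrite (cs_mulA hA) h2 mul0x.
- exact: perp_closed.
Qed.

Lemma ideal_mclosed (X : set A) : closed_ideal mul X -> mclosed X.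
Proof. by case. Qed.

Lemma perp_mclosed (X : set A) : mclosed X -> mclosed (perp mul X).
Proof. by move=> /perp_ideal; case. Qed.

Lemma auto0 {f : A -> A} : star_automorphism mul star f -> f 0 = 0.
Proof.
case=> fD _ _ _ _; have := fD 0 0; rewrite addr0 => /eqP.
by rewrite -subr_eq subrr eq_sym => /eqP.
Qed.

Lemma image_perp (f : A -> A) (X : set A) : star_automorphism mul star f ->
  f @` perp mul X = perp mul (f @` X).
Proof.
move=> fa; have f0 := auto0 fa.
case: fa => _ _ fM _ [f' fK f'K].
apply/seteqP; split.
  move=> _ [a [_ ha] <-]; split => // _ [x Xx <-].
  by have [h1 h2] := ha x Xx; rewrite -!fM h1 h2 f0.
move=> b [_ hb]; exists (f' b); last exact: f'K.
split => // x Xx; have [h1 h2] := hb (f x) (ex_intro2 _ _ x Xx erefl).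
rewrite -(f'K b) -fM in h1; rewrite -(f'K b) -fM in h2.
have e1 : f (mul (f' b) x) = f 0 by rewrite f0.
have e2 : f (mul x (f' b)) = f 0 by rewrite f0.
by split; [have := congr1 f' e1 | have := congr1 f' e2]; rewrite !fK.
Qed.
End Aux.

Unset Implicit Arguments.
Theorem proposition3p10 (R : realType) (A : completeNormedModType R[i])
  (mul : A -> A -> A) (star : A -> A) (hA : cstar_axioms mul star)
  (G : groupType) (alpha : G -> A -> A) (halpha : cstar_action mul star alpha)
  (J : set A) (H : set G) (hsub : regular_subsystem mul alpha J H) :
  sub_induced mul alpha J H <->
  (H = [set g | alpha g @` J = J] /\
   forall g k : G, ~ H (g^-1 * k)%g ->
     orthogonal_ideals (alpha g @` J) (alpha k @` J)).
Proof.
split.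
  by case=> K [_ _ _ _ [ho _ hH]].
case=> hH ho.
case: halpha => haut ha1 haM.
case: hsub => _ [hJi _] hJ0 _.
have aK (g : G) x : alpha g (alpha g^-1%g x) = x by rewrite -haM mulgV ha1.
pose U := \bigcup_(g in setT) alpha g @` J.
have mU : mclosed mul U.
  move=> a _ [g _ [j Jj <-]].
  have [_ _ fM _ _] := haut g.
  have [h1 h2] := ideal_mclosed hJi (alpha g^-1%g a) Jj.
  split; exists g => //.
    by exists (mul (alpha g^-1%g a) j) => //; rewrite fM aK.
  by exists (mul j (alpha g^-1%g a)) => //; rewrite fM aK.
have aU g : alpha g @` U = U.
  apply/seteqP; split.
    by move=> _ [_ [h _ [j Jj <-]] <-]; exists (g * h)%g => //; exists j; rewrite ?haM.
  move=> _ [k _ [j Jj <-]]; exists (alpha (g^-1 * k)%g j).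
    by exists (g^-1 * k)%g => //; exists j.
  by rewrite -haM mulVKg.
pose K := perp mul (perp mul U).
have JK : J `<=` K.
  move=> x Jx; apply: perp_ext; exists 1%g => //; exists x => //; exact: ha1.
exists K; split.
- move=> K0; apply: hJ0; apply/seteqP; split.
    by rewrite -K0.
  by move=> _ ->; case: hJi.
- split; first exact/(perp_ideal hA)/(perp_mclosed hA).
  by rewrite /K perp3.
- by move=> g; rewrite /K (image_perp _ (haut g)) (image_perp _ (haut g)) aU.
- exact: JK.
- split => //.
  apply/seteqP; split; first by move=> a [].
  move=> a Ka; split => // y [_ hy].
  by case: Ka => _; apply; split.
Qed.
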